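(* In the setting described in the context, let $\{q,q'\}\in F$ be an edge of $K$ with source $S(q,q')=(u,v)$, where $\{u,v\}\in E_i$ has weight $w$. Then \[ d_Z(q,u)+w+d_Z(v,q')\le (1+\varepsilon/2)\,w, \] i.e., the tour in the spanner (with Steiner points) consisting of a $Z$-path from $q$ to $u$, the edge $\{u,v\}$, and a $Z$-path from $v$ to $q'$ has length at most $(1+\varepsilon/2)w$.
   Context: Let $G=(V,E)$ be a connected undirected graph on $n$ vertices with positive integer edge weights $w$ and a unique minimum spanning tree $Z$. Fix an integer $k\ge 2$, $\varepsilon>0$, $t=(2k-1)(1+\varepsilon)$, and let $H$ be the greedy spanner: starting from $H=(V,\emptyset)$, the edges of $E$ are processed in non-decreasing order of weight and $\{u,v\}$ is added to $H$ iff currently $d_H(u,v)>t\cdot w(u,v)$. Order the vertices $v_1,\dots,v_n$ by a preorder traversal of $Z$ and let $L=\sum_{j=2}^n d_Z(v_{j-1},v_j)$. Fix $i\in\{1,\dots,\lceil\log_k n\rceil\}$, set $a=k^{i-1}L/n$, and let $E_i=\{e\in E(H)\setminus E(Z): a<w(e)\le ka\}$. View $Z$ as a metric tree (each edge of weight $x$ is a segment of length $x$) and let $d_Z$ denote distance in it. Let $P=(p_0,\dots,p_L)$ be a path with unit-length edges, where $v_1=p_0$ and $v_j=p_{\ell_j}$ with $\ell_1=0$, $\ell_j=\ell_{j-1}+d_Z(v_{j-1},v_j)$; each point $p_h$ with $\ell_{j-1}\le h\le \ell_j$ is identified with the point of $Z$ on the $Z$-path from $v_{j-1}$ to $v_j$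 at distance $h-\ell_{j-1}$ from $v_{j-1}$ (these added points are Steiner points subdividing edges of $Z\subseteq H$; $\hat H$ denotes $H$ with these subdivisions). Set $s=8L/(\varepsilon a)$, assumed (by scaling) to be such that $s$ and $L/s=\varepsilon a/8$ are integers. For $j\in[s]$ the interval $I_j$ is $\{p_{(j-1)L/s},\dots,p_{jL/s}\}$, and $r_j$ is an arbitrarily chosen interior point of $I_j$; $R=\{r_1,\dots,r_s\}$. For an integer $b\ge 0$, $N_b(j)=\{r_h: h\in[s], |j-h|\le b\}$. The graph $K=(R,F)$ is defined as follows: for each $e=\{u,v\}\in E_i$ with $u\in I_h$, $v\in I_j$, let $b=\lfloor w(e)/a\rfloor$ and let $M$ be an arbitrary maximal matching between $N_b(h)$ and $N_b(j)$; all edges of $M$ are added to $F$, and for each $\{q,q'\}\in M$ with $q\in N_b(h)$, $q'\in N_b(j)$, the edge $\{u,v\}$ is called its source, written $S(q,q')=(u,v)$. *)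

(* Defs.v *)
From HB Require Import structures.
From mathcomp Require Import all_boot all_order all_algebra.
From mathcomp Require Import boolp reals.
Set Implicit Arguments. Unset Strict Implicit. Unset Printing Implicit Defensive.
Import Order.TTheory GRing.Theory Num.Theory.
Local Open Scope ring_scope.

Section Setting.
Variable n : nat.
Local Notation V := 'I_n.
Variable w : V -> V -> nat.

Fixpoint walkw (x : V) (zs : seq V) : nat :=
  if zs is y :: zs' then (w x y + walkw y zs')%N else 0%N.

Definition is_walk (S : rel V) (x y : V) (zs : seq V) : bool :=
  path S x zs && (last x zs == y).

Definition walk_wt_exists (S : rel V) (x y : V) (d : nat) : Prop :=
  exists zs, is_walk S x y zs /\ walkw x zs = d.

Lemma gdist_ex_proof (S : rel V) (x y : V) :
  (exists d, walk_wt_exists S x y d) ->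
  exists d, `[< walk_wt_exists S x y d >].
Proof. by case=> d hd; exists d; apply: asboolT. Qed.

(* shortest-path distance d_S(x,y) (0 if y is unreachable, never used so) *)
Definition gdist (S : rel V) (x y : V) : nat :=
  match pselect (exists d, walk_wt_exists S x y d) with
  | left h => ex_minn (gdist_ex_proof h)
  | right _ => 0%N
  end.

Definition shortest_walk (S : rel V) (x y : V) (zs : seq V) : Prop :=
  is_walk S x y zs /\ forall zs', is_walk S x y zs' -> (walkw x zs <= walkw x zs')%N.

Definition connectedR (S : rel V) : Prop := forall x y, exists zs, is_walk S x y zs.

Definition acyclic (S : rel V) : Prop :=
  forall x zs, is_walk S x x zs -> uniq zs -> (size zs < 3)%N.

Definition wt (S : rel V) : nat :=
  (\sum_(xy : V * V | (xy.1 < xy.2)%N && S xy.1 xy.2) w xy.1 xy.2)%N.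

Definition spanning_tree (E S : rel V) : Prop :=
  [/\ symmetric S, subrel S E, connectedR S & acyclic S].

Definition is_mst (E S : rel V) : Prop :=
  spanning_tree E S /\ forall S', spanning_tree E S' -> (wt S <= wt S')%N.

Definition edge_list (E : rel V) : seq (V * V) :=
  [seq xy : V * V <- enum {: V * V} | (xy.1 < xy.2)%N && E xy.1 xy.2].

(* ord x lists the neighbours of x (in the chosen child order); p = parent *)
Fixpoint pre_dfs (ord : V -> seq V) (f : nat) (p x : V) : seq V :=
  if f is f'.+1 then x :: flatten [seq pre_dfs ord f' x y | y <- ord x & y != p]
  else [::].

Variable R : realType.

Definition adjs (S : seq (V * V)) : rel V :=
  fun x y => ((x, y) \in S) || ((y, x) \in S).

(* e is added iff d_H(e.1,e.2) > t * w(e) , i.e. no H-walk of weight <= t*w(e) *)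
Definition greedy_add (t : R) (S : seq (V * V)) (e : V * V) : bool :=
  `[< ~ exists zs, is_walk (adjs S) e.1 e.2 zs /\
                   ((walkw e.1 zs)%:R <= t * (w e.1 e.2)%:R)%R >].

Definition greedy (t : R) (es : seq (V * V)) : seq (V * V) :=
  foldl (fun S e => if greedy_add t S e then rcons S e else S) [::] es.

(* (x, y, t): the zpoint on the edge {x,y} at distance t from x;
   (x, x, 0) is the vertex x *)
Definition zpoint := (V * V * R)%type.
Definition vpt (x : V) : zpoint := (x, x, 0%R).

Fixpoint walk_pt (x : V) (zs : seq V) (t : nat) : zpoint :=
  match zs with
  | [::] => vpt x
  | y :: zs' =>
      if t == 0%N then vpt x
      else if (t < w x y)%N then (x, y, t%:R)
      else walk_pt y zs' (t - w x y)
  end.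

Definition ends (p : zpoint) : seq (V * R) :=
  let: (x, y, t) := p in
  if x == y then [:: (x, t)] else [:: (x, t); (y, ((w x y)%:R - t)%R)].

Definition direct (p p' : zpoint) : seq R :=
  let: (x, y, t) := p in let: (x', y', t') := p' in
  if x == y then [::]
  else if (x == x') && (y == y') then [:: `|t - t'|%R]
  else if (x == y') && (y == x') then [:: `|t - ((w x y)%:R - t')|%R]
  else [::].

(* geodesic distance d_Z in the metric graph of Z *)
Definition dpt (Z : rel V) (p p' : zpoint) : R :=
  let c := [seq (e.2 + (gdist Z e.1 e'.1)%:R + e'.2)%R | e <- ends p, e' <- ends p']
           ++ direct p p' in
  foldr Num.min (head 0%R c) c.

(* vs = (v_1, ..., v_n) (0-based: v_{m+1} = nth r0 vs m);
   ell m = ell_{m+1} = sum_{j=2}^{m+1} d_Z(v_{j-1}, v_j) *)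
Definition ell (Z : rel V) (vs : seq V) (r0 : V) (m : nat) : nat :=
  (\sum_(0 <= j < m) gdist Z (nth r0 vs j) (nth r0 vs j.+1))%N.

Definition Ltot (Z : rel V) (vs : seq V) (r0 : V) : nat := ell Z vs r0 n.-1.

(* p_x : the zpoint of Z identified with position x of P, where zp m is
   the Z-path from v_{m+1} to v_{m+2} *)
Definition pos (Z : rel V) (vs : seq V) (r0 : V) (zp : nat -> seq V) (x : nat)
  : zpoint :=
  let m := find (fun m => x <= ell Z vs r0 m.+1)%N (iota 0 n.-1) in
  if (m < n.-1)%N then walk_pt (nth r0 vs m) (zp m) (x - ell Z vs r0 m)
  else vpt (nth r0 vs n.-1).

Definition in_I (lam : nat) (P : nat -> zpoint) (j : nat) (p : zpoint) : Prop :=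
  exists x, (j.-1 * lam <= x <= j * lam)%N /\ P x = p.

End Setting.

(* N_b(j), as a set of indices h in [s] (standing for r_h) *)
Definition Nb (s : nat) (b : int) (j : nat) : pred nat :=
  fun h => ((1 <= h <= s)%N && (`|j%:Z - h%:Z| <= b)%R).

Definition max_matching (A B : pred nat) (M : seq (nat * nat)) : Prop :=
  [/\ uniq M,
      (forall e, e \in M -> [/\ A e.1, B e.2 & e.1 != e.2]),
      (forall e f, e \in M -> f \in M -> e != f ->
         [&& e.1 != f.1, e.1 != f.2, e.2 != f.1 & e.2 != f.2]) &
      (forall q q', A q -> B q' -> q != q' ->
         exists2 e, e \in M & [|| e.1 == q, e.2 == q, e.1 == q' | e.2 == q'])].

(* Main.v *)
Require Import Defs.
From HB Require Import structures.
From mathcomp Require Import all_boot all_order all_algebra.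
From mathcomp Require Import boolp reals.
From mathcomp Require Import zify ring lra.
Import Order.TTheory GRing.Theory Num.Theory.
Local Open Scope ring_scope.
Set Implicit Arguments. Unset Strict Implicit. Unset Printing Implicit Defensive.
Lemma walkw_cat n (w : 'I_n -> 'I_n -> nat) x s1 s2 :
  walkw w x (s1 ++ s2) = (walkw w x s1 + walkw w (last x s1) s2)%N.
Proof. by elim: s1 x => [|y s IH] x //=; rewrite IH addnA. Qed.

Lemma walkw_rcons n (w : 'I_n -> 'I_n -> nat) x s y :
  walkw w x (rcons s y) = (walkw w x s + w (last x s) y)%N.
Proof. by rewrite -cats1 walkw_cat /= addn0. Qed.

Lemma rev_walk n (w : 'I_n -> 'I_n -> nat) (S : rel 'I_n) :
  symmetric S -> (forall a b, w a b = w b a) ->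
  forall x zs, path S x zs -> exists zs', [/\ path S (last x zs) zs',
     last (last x zs) zs' = x & walkw w (last x zs) zs' = walkw w x zs].
Proof.
move=> Ss ws x zs; elim: zs x => [|y zs IH] x /=.
  by move=> _; exists [::].
case/andP=> Sxy /IH [zs' [P1 L1 W1]]; exists (rcons zs' x); split.
- by rewrite rcons_path P1 L1 Ss.
- by rewrite last_rcons.
- by rewrite walkw_rcons W1 L1 ws addnC.
Qed.

Lemma gdist_le n (w : 'I_n -> 'I_n -> nat) S x y zs :
  is_walk S x y zs -> (gdist w S x y <= walkw w x zs)%N.
Proof.
move=> H; rewrite /gdist; case: pselect => [h|h]; last by [].
case: ex_minnP => m _; apply; apply/asboolP; by exists zs.
Qed.

Lemma gdist_short n (w : 'I_n -> 'I_n -> nat) S x y zs :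
  shortest_walk w S x y zs -> gdist w S x y = walkw w x zs.
Proof.
case=> Hw Hmin; apply/eqP; rewrite eqn_leq (gdist_le w Hw) /=.
rewrite /gdist; case: pselect => [h|h]; last by case: h; exists (walkw w x zs), zs.
by case: ex_minnP => m /asboolP [zs' [H1 <-]] _; apply: Hmin.
Qed.

Lemma gdist_sym_le n (w : 'I_n -> 'I_n -> nat) (S : rel 'I_n) :
  symmetric S -> (forall a b, w a b = w b a) ->
  forall x y zs, is_walk S x y zs -> (gdist w S y x <= walkw w x zs)%N.
Proof.
move=> Ss ws x y zs /andP [P /eqP L].
have [zs' [P1 L1 W1]] := rev_walk Ss ws P.
rewrite -W1 -L; apply: gdist_le; by rewrite /is_walk P1 L1 eqxx.
Qed.
Lemma walk_pt0 n (w : 'I_n -> 'I_n -> nat) (R : realType) x zs :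
  walk_pt w R x zs 0 = vpt R x.
Proof. by case: zs. Qed.

Lemma walk_pt_cat n (w : 'I_n -> 'I_n -> nat) (R : realType) x s1 s2 t :
  walk_pt w R x (s1 ++ s2) t =
  if (t <= walkw w x s1)%N then walk_pt w R x s1 t
  else walk_pt w R (last x s1) s2 (t - walkw w x s1).
Proof.
elim: s1 x t => [|y s IH] x t /=.
  case: ifP => [|_]; last by rewrite subn0.
  by rewrite leqn0 => /eqP ->; rewrite walk_pt0.
case: eqP => [->|/eqP t0] //.
case: ifP => [tw|tw].
  by rewrite (leq_trans (ltnW tw)) ?leq_addr.
rewrite IH; have -> : (t - w x y <= walkw w y s)%N = (t <= w x y + walkw w y s)%N.
  by apply/idP/idP; lia.
by case: ifP => // _; rewrite subnDA.
Qed.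

Lemma walk_pt_end n (w : 'I_n -> 'I_n -> nat) (R : realType) (S : rel 'I_n) x zs t :
  (forall a b, S a b -> (0 < w a b)%N) -> path S x zs ->
  (walkw w x zs <= t)%N -> walk_pt w R x zs t = vpt R (last x zs).
Proof.
move=> pos; elim: zs x t => [|y s IH] x t //= /andP [Sxy P] H.
have := pos _ _ Sxy => p.
have -> : (t == 0%N) = false by apply/eqP; lia.
have -> : (t < w x y)%N = false by apply/negbTE; lia.
by apply: IH => //; lia.
Qed.

Definition vtx n (x0 : 'I_n) W k := last x0 (take k W).

Lemma walk_pt_spec n (w : 'I_n -> 'I_n -> nat) (R : realType) (S : rel 'I_n) x0 W t :
  path S x0 W -> (t <= walkw w x0 W)%N ->
  exists k, (k <= size W)%N /\
   ((walk_pt w R x0 W t = vpt R (vtx x0 W k) /\ walkw w x0 (take k W) = t) \/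
    [/\ (k < size W)%N, S (vtx x0 W k) (vtx x0 W k.+1),
        (walkw w x0 (take k W) < t < walkw w x0 (take k.+1 W))%N,
        walkw w x0 (take k.+1 W) = (walkw w x0 (take k W) + w (vtx x0 W k) (vtx x0 W k.+1))%N
      & walk_pt w R x0 W t = (vtx x0 W k, vtx x0 W k.+1, ((t - walkw w x0 (take k W))%N)%:R)]).
Proof.
elim: W x0 t => [|y W IH] x0 t /=.
  by rewrite leqn0 => _ /eqP ->; exists 0%N; split => //; left.
case/andP=> Sxy P Ht.
case: eqP => [->|/eqP t0].
  by exists 0%N; split => //; left.
case: ifP => [tw|tw].
  exists 0%N; split => //; right; rewrite /vtx /= take0 /= ?addn0 ?subn0 ?add0n.
  by split => //; apply/andP; split; lia.
have Ht2 : (t - w x0 y <= walkw w y W)%N by lia.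
have [k [Hk Hc]] := IH y (t - w x0 y)%N P Ht2.
exists (k.+1)%N; split; first by [].
rewrite /vtx /= -/(vtx y W k) -/(vtx y W k.+1).
case: Hc => [[E1 E2]|[H1 H2 /andP [H3 H4] H5 H6]]; [left|right].
  by split => //; lia.
split => //.
- by apply/andP; split; lia.
- by rewrite H5 addnA.
- by rewrite H6; congr (_, _, _%:R); lia.
Qed.

Lemma foldr_min_le (R : realType) (a : R) c z : z \in c -> foldr Num.min a c <= z.
Proof.
elim: c => [|y c IH] //=; rewrite in_cons => /orP [/eqP ->|/IH H].
  by rewrite ge_min lexx.
by rewrite ge_min H orbT.
Qed.

Lemma dpt_le n (w : 'I_n -> 'I_n -> nat) (R : realType) S (p p' : zpoint n R) e e' :
  e \in ends w p -> e' \in ends w p' ->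
  dpt w S p p' <= e.2 + (gdist w S e.1 e'.1)%:R + e'.2.
Proof.
move=> He He'; rewrite /dpt; apply: foldr_min_le; rewrite mem_cat; apply/orP; left.
by apply/allpairsP; exists (e, e').
Qed.

Lemma ends_vpt n (w : 'I_n -> 'I_n -> nat) (R : realType) u :
  ends w (vpt R u) = [:: (u, 0)].
Proof. by rewrite /ends /vpt eqxx. Qed.

Lemma ends_edge n (w : 'I_n -> 'I_n -> nat) (R : realType) a b (t : R) :
  a != b -> ends w (a, b, t) = [:: (a, t); (b, (w a b)%:R - t)].
Proof. by rewrite /ends => /negbTE ->. Qed.

Lemma seg_walk n (w : 'I_n -> 'I_n -> nat) (S : rel 'I_n) x0 W k1 k2 :
  path S x0 W -> (k1 <= k2)%N ->
  exists seg, is_walk S (vtx x0 W k1) (vtx x0 W k2) seg /\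
    walkw w x0 (take k2 W) = (walkw w x0 (take k1 W) + walkw w (vtx x0 W k1) seg)%N.
Proof.
move=> P Hk; exists (drop k1 (take k2 W)).
have E : take k2 W = take k1 W ++ drop k1 (take k2 W).
  by rewrite -{1}(cat_take_drop k1 (take k2 W)) take_takel.
have P2 : path S x0 (take k2 W).
  by move: P; rewrite -{1}(cat_take_drop k2 W) cat_path => /andP [].
rewrite E cat_path in P2; case/andP: P2 => _; rewrite -/(vtx x0 W k1) => P3.
split; last by rewrite {1}E walkw_cat.
rewrite /is_walk P3 /=; apply/eqP; rewrite /vtx {2}E last_cat //.
Qed.


Lemma key n (w : 'I_n -> 'I_n -> nat) (R : realType) (S : rel 'I_n) x0 W x y u D :
  symmetric S -> irreflexive S -> (forall a b, w a b = w b a) ->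
  path S x0 W -> (x <= walkw w x0 W)%N -> (y <= walkw w x0 W)%N ->
  walk_pt w R x0 W x = vpt R u -> (x <= y + D)%N -> (y <= x + D)%N ->
  dpt w S (walk_pt w R x0 W y) (vpt R u) <= D%:R /\
  dpt w S (vpt R u) (walk_pt w R x0 W y) <= D%:R.
Proof.
move=> Ss Si ws P Hx Hy HU D1 D2.
have gd : forall j1 j2, (j1 <= j2)%N ->
   (gdist w S (vtx x0 W j1) (vtx x0 W j2) + walkw w x0 (take j1 W) <= walkw w x0 (take j2 W))%N /\
   (gdist w S (vtx x0 W j2) (vtx x0 W j1) + walkw w x0 (take j1 W) <= walkw w x0 (take j2 W))%N.
  move=> j1 j2 hj; have [seg [Hs Hw]] := seg_walk w P hj.
  have g1 := gdist_le w Hs; have g2 := gdist_sym_le Ss ws Hs.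
  by rewrite Hw; split; lia.
have [k [Hk [[Ex Wx]|[_ Sk _ _ Ex]]]] := walk_pt_spec R P Hx; last first.
  by move: HU; rewrite Ex => -[E1 E2 _]; move: Sk; rewrite E1 E2 Si.
move: HU; rewrite Ex => -[Eu]; subst u.
set u := vtx x0 W k.
have mu : (u, 0) \in ends w (vpt R u) by rewrite ends_vpt mem_head.
have [k' [Hk' [[Ey Wy]|[Hk'lt Sk' /andP [H1 H2] H3 Ey]]]] := walk_pt_spec R P Hy.
  rewrite Ey; set a := vtx x0 W k'.
  have ma : (a, 0) \in ends w (vpt R a) by rewrite ends_vpt mem_head.
  have L1 := dpt_le S ma mu; have L2 := dpt_le S mu ma.
  have [kk|kk] := leqP k k'.
    have [g1 g2] := gd _ _ kk; rewrite -/a -/u in g1 g2.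
    by split; [apply: le_trans L1 _|apply: le_trans L2 _]; rewrite /= ?addr0 ?add0r -?natrD ?ler_nat; lia.
  have [g1 g2] := gd _ _ (ltnW kk); rewrite -/a -/u in g1 g2.
  by split; [apply: le_trans L1 _|apply: le_trans L2 _]; rewrite /= ?addr0 ?add0r -?natrD ?ler_nat; lia.
rewrite Ey; set a := vtx x0 W k'; set b := vtx x0 W k'.+1.
have ab : a != b by apply/eqP; rewrite /a /b => E; move: Sk'; rewrite E Si.
set t0 := (y - walkw w x0 (take k' W))%N.
have [xy|xy] := leqP x y.
  have kk : (k <= k')%N.
    rewrite leqNgt; apply/negP => /gd [g1 _]; lia.
  have [g1 g2] := gd _ _ kk; rewrite -/a -/u in g1 g2.
  have ma : (a, (t0%:R : R)) \in ends w (a, b, (t0%:R : R)) by rewrite ends_edge // mem_head.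
  have L1 := dpt_le S ma mu; have L2 := dpt_le S mu ma.
  by split; [apply: le_trans L1 _|apply: le_trans L2 _]; rewrite /= ?addr0 ?add0r -?natrD ?ler_nat; lia.
have kk : (k'.+1 <= k)%N.
  rewrite leqNgt; apply/negP; rewrite ltnS => Hc; have [g1 _] := gd _ _ Hc; lia.
have [g1 g2] := gd _ _ kk; rewrite -/a -/u in g1 g2.
have mb : (b, (w a b)%:R - (t0%:R : R)) \in ends w (a, b, (t0%:R : R)).
  by rewrite ends_edge // inE mem_head orbT.
have L1 := dpt_le S mb mu; have L2 := dpt_le S mu mb.
have Ht : (t0 <= w a b)%N by rewrite /t0 /a /b; lia.
by split; [apply: le_trans L1 _|apply: le_trans L2 _];
  rewrite /= ?addr0 ?add0r -natrB // -?natrD ?ler_nat; rewrite /t0 /a /b /u; move: g1 g2; rewrite /t0 /a /b /u; lia.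
Qed.

Definition Wseg n (zp : nat -> seq 'I_n) m := flatten [seq zp j | j <- iota 0 m].

Lemma Wseg_cat n (zp : nat -> seq 'I_n) m1 m2 :
  Wseg zp (m1 + m2) = Wseg zp m1 ++ flatten [seq zp j | j <- iota m1 m2].
Proof. by rewrite /Wseg iotaD map_cat flatten_cat. Qed.

Lemma WsegS n (zp : nat -> seq 'I_n) m : Wseg zp m.+1 = Wseg zp m ++ zp m.
Proof. by rewrite -addn1 Wseg_cat /= cats0. Qed.

Lemma ell0 n w (Z : rel 'I_n) vs r0 : ell w Z vs r0 0 = 0%N.
Proof. by rewrite /ell big_geq. Qed.

Lemma ellS n w (Z : rel 'I_n) vs r0 m :
  ell w Z vs r0 m.+1 = (ell w Z vs r0 m + gdist w Z (nth r0 vs m) (nth r0 vs m.+1))%N.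
Proof. by rewrite /ell big_nat_recr. Qed.

Lemma Wseg_props n w (Z : rel 'I_n) vs r0 zp N :
  (forall m, (m < N)%N -> shortest_walk w Z (nth r0 vs m) (nth r0 vs m.+1) (zp m)) ->
  forall m, (m <= N)%N -> [/\ path Z (nth r0 vs 0) (Wseg zp m),
      last (nth r0 vs 0) (Wseg zp m) = nth r0 vs m &
      walkw w (nth r0 vs 0) (Wseg zp m) = ell w Z vs r0 m].
Proof.
move=> Hzp; elim=> [|m IH] Hm; first by rewrite /Wseg /= ell0.
have [P1 L1 W1] := IH (ltnW Hm).
have Hs := Hzp m Hm; have G := gdist_short Hs; case: Hs => /andP [Pm /eqP Lm] _.
rewrite WsegS cat_path last_cat walkw_cat L1 P1 Pm Lm W1 ellS G; split => //.
Qed.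

Lemma pos_eq n w (R : realType) (Z : rel 'I_n) vs r0 zp :
  (forall a b, Z a b -> (0 < w a b)%N) ->
  (forall m, (m < n.-1)%N -> shortest_walk w Z (nth r0 vs m) (nth r0 vs m.+1) (zp m)) ->
  forall x, pos w R Z vs r0 zp x = walk_pt w R (nth r0 vs 0) (Wseg zp n.-1) x.
Proof.
move=> Zpos Hzp x; rewrite /pos.
set N := n.-1; set p := (fun m => _); set m := find p _.
have HN := Wseg_props Hzp.
have [P0 L0 W0] := HN N (leqnn N).
have mle : (m <= N)%N by have := find_size p (iota 0 N); rewrite size_iota.
have before : forall j, (j < m)%N -> (ell w Z vs r0 j.+1 < x)%N.
  move=> j hj; have := before_find 0 hj.
  have jN : (j < N)%N by apply: (leq_trans hj).
  by rewrite nth_iota // add0n /p => /negbT; rewrite -ltnNge.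
case: ltnP => [mN|mN].
  have Hhas : has p (iota 0 N) by rewrite has_find size_iota.
  have := nth_find 0 Hhas; rewrite -/m nth_iota // add0n /p => xle.
  have elx : (ell w Z vs r0 m <= x)%N.
    case: (m) before => [|j] bf; first by rewrite ell0.
    by apply: ltnW; apply: bf.
  have [Pm Lm Wm] := HN m (ltnW mN).
  have Hs := Hzp m mN; have G := gdist_short Hs; case: Hs => /andP [Pz /eqP Lz] _.
  have -> : Wseg zp N = (Wseg zp m ++ zp m) ++ flatten [seq zp j | j <- iota m.+1 (N - m.+1)].
    by rewrite -WsegS -Wseg_cat subnKC.
  rewrite -catA walk_pt_cat Wm.
  case: leqP => [xm|xm].
    have -> : x = ell w Z vs r0 m by apply/eqP; rewrite eqn_leq xm elx.
    rewrite subnn walk_pt0 (walk_pt_end R Zpos Pm) ?Wm // Lm.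
    by [].
  rewrite Lm walk_pt_cat ifT //.
  by rewrite -G; move: xle; rewrite ellS; lia.
have mE : m = N by apply/eqP; rewrite eqn_leq mN mle.
rewrite (walk_pt_end R Zpos P0) ?L0 // W0.
case: (N) before mE => [|j] bf mE; first by rewrite ell0.
by apply: ltnW; apply: bf; rewrite mE.
Qed.
Lemma dist_bound (h qi lam xu r : nat) : (1 <= h)%N -> (1 <= qi)%N -> (h.-1 * lam <= xu <= h * lam)%N ->
  (qi.-1 * lam < r < qi * lam)%N ->
  (xu <= r + (maxn qi h - minn qi h).+1 * lam)%N /\ (r <= xu + (maxn qi h - minn qi h).+1 * lam)%N.
Proof.
move=> h1 q1 /andP [x1 x2] /andP [r1 r2].
have eq : (qi * lam = qi.-1 * lam + lam)%N by rewrite -{1}(prednK q1) mulSn addnC.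
have eh : (h * lam = h.-1 * lam + lam)%N by rewrite -{1}(prednK h1) mulSn addnC.
case: (leqP qi h) => hq.
- have e : (h * lam = qi.-1 * lam + (h - qi).+1 * lam)%N by rewrite -mulnDl; congr (_ * _)%N; lia.
  have m : (qi.-1 * lam <= h.-1 * lam)%N by apply: leq_mul; lia.
  split; lia.
- have e : (qi * lam = h.-1 * lam + (qi - h).+1 * lam)%N by rewrite -mulnDl; congr (_ * _)%N; lia.
  have m : (h * lam <= qi.-1 * lam)%N by apply: leq_mul; lia.
  split; lia.
Qed.

Lemma int_dist (h qi : nat) (b : int) : (`|h%:Z - qi%:Z| <= b) -> ((maxn qi h - minn qi h)%N%:Z <= b).
Proof. lia. Qed.

Lemma real_fin (R : realType) (eps a W : R) (dq lam : nat) :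
  0 < eps -> 0 < a -> a < W -> lam%:R = eps * a / 8 ->
  (dq%:Z <= Num.floor (W / a))%R -> ((dq.+1 * lam)%N%:R : R) <= eps * W / 4.
Proof.
move=> e0 a0 aW lamE Hd.
have H1 : (dq%:R : R) <= W / a.
  apply: le_trans (floor_le _); rewrite -[dq%:R]/((dq%:Z)%:~R : R) ler_int //.
rewrite ler_pdivlMr // in H1.
rewrite natrM lamE -addn1 natrD.
nra.
Qed.

Lemma fin3 (R : realType) (x y W e : R) :
  x <= e * W / 4 -> y <= e * W / 4 -> x + W + y <= (1 + e / 2) * W.
Proof. move=> H1 H2; lra. Qed.

Unset Implicit Arguments.

Theorem proposition1
  (R : realType) (n : nat) (E : rel 'I_n) (w : 'I_n -> 'I_n -> nat)
  (* G = (V,E): connected simple undirected graph, positive integer weights *)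
  (HEsym : symmetric E) (HEirr : irreflexive E)
  (Hwsym : forall x y, w x y = w y x)
  (Hwpos : forall x y, E x y -> (0 < w x y)%N)
  (Hconn : connectedR E)
  (* Z is the unique minimum spanning tree *)
  (Z : rel 'I_n) (HZ : is_mst w E Z)
  (HZuniq : forall Z' : rel 'I_n, is_mst w E Z' -> Z' =2 Z)
  (* parameters k >= 2, eps > 0 ; t = (2k-1)(1+eps) *)
  (k : nat) (eps : R) (Hk : (2 <= k)%N) (Heps : 0 < eps)
  (* greedy processing order: the edges of E, sorted by non-decreasing weight *)
  (es : seq ('I_n * 'I_n)) (Hes_perm : perm_eq es (edge_list E))
  (Hes_sorted : sorted (fun e f => (w e.1 e.2 <= w f.1 f.2)%N) es)
  (* preorder traversal of Z from rt, children visited in order ord x *)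
  (rt : 'I_n) (ord : 'I_n -> seq 'I_n)
  (Hord : forall x, perm_eq (ord x) [seq y <- enum 'I_n | Z x y])
  (* zp m : the Z-path from v_{m+1} to v_{m+2} *)
  (zp : nat -> seq 'I_n)
  (Hzp : forall m, (m < n.-1)%N ->
     shortest_walk w Z (nth rt (pre_dfs ord n rt rt) m)
                       (nth rt (pre_dfs ord n rt rt) m.+1) (zp m))
  (* the scale i and a = k^(i-1) L / n *)
  (i : nat) (Hi : (1 <= i <= up_log k n)%N)
  (* s = 8L/(eps a) and L/s are integers *)
  (s lam : nat)
  (Hs : s%:R = 8 * (Ltot w Z (pre_dfs ord n rt rt) rt)%:R /
               (eps * ((k ^ i.-1)%N%:R * (Ltot w Z (pre_dfs ord n rt rt) rt)%:R / n%:R)))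
  (Hlam : lam%:R = (Ltot w Z (pre_dfs ord n rt rt) rt)%:R / s%:R :> R)
  (* r_j : an interior point of I_j (given by its position on P) *)
  (r : nat -> nat)
  (Hr : forall j, (1 <= j <= s)%N -> (j.-1 * lam < r j < j * lam)%N)
  (* the edge {u,v} of E_i *)
  (u v : 'I_n)
  (HuvH : ((u, v) \in greedy w ((2 * k - 1)%N%:R * (1 + eps)) es) ||
          ((v, u) \in greedy w ((2 * k - 1)%N%:R * (1 + eps)) es))
  (HuvZ : ~~ Z u v)
  (Hwa : (k ^ i.-1)%N%:R * (Ltot w Z (pre_dfs ord n rt rt) rt)%:R / n%:R < (w u v)%:R :> R)
  (Hwb : (w u v)%:R <= k%:R *
           ((k ^ i.-1)%N%:R * (Ltot w Z (pre_dfs ord n rt rt) rt)%:R / n%:R) :> R)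
  (* u in I_h, v in I_j *)
  (h j : nat) (Hh : (1 <= h <= s)%N) (Hj : (1 <= j <= s)%N)
  (HuI : in_I lam (pos w R Z (pre_dfs ord n rt rt) rt zp) h (vpt R u))
  (HvI : in_I lam (pos w R Z (pre_dfs ord n rt rt) rt zp) j (vpt R v))
  (* M : a maximal matching between N_b(h) and N_b(j), b = floor(w/a) *)
  (M : seq (nat * nat))
  (HM : max_matching
     (Nb s (Num.floor ((w u v)%:R /
        ((k ^ i.-1)%N%:R * (Ltot w Z (pre_dfs ord n rt rt) rt)%:R / n%:R) : R)) h)
     (Nb s (Num.floor ((w u v)%:R /
        ((k ^ i.-1)%N%:R * (Ltot w Z (pre_dfs ord n rt rt) rt)%:R / n%:R) : R)) j) M)
  (* {q,q'} = {r_qi, r_qi'} in M, with source (u,v) *)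
  (qi qi' : nat) (Hq : (qi, qi') \in M) :
  dpt w Z (pos w R Z (pre_dfs ord n rt rt) rt zp (r qi)) (vpt R u)
  + (w u v)%:R
  + dpt w Z (vpt R v) (pos w R Z (pre_dfs ord n rt rt) rt zp (r qi'))
  <= (1 + eps / 2) * (w u v)%:R.
Proof.
have [[Zs Zsub _ _] _] := HZ.
have Zpos : forall a b, Z a b -> (0 < w a b)%N := fun a b h => Hwpos a b (Zsub a b h).
have Zirr : irreflexive Z.
  by move=> x; apply/negbTE/negP => /Zsub; rewrite HEirr.
have Hpos := pos_eq R Zpos Hzp.
have [P0 _ W0] := Wseg_props Hzp (leqnn n.-1).
case: HuI => xu [Hxu Eu]; case: HvI => xv [Hxv Ev].
rewrite Hpos in Eu; rewrite Hpos in Ev; rewrite !Hpos.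
case: HM => _ Hin _ _; have [Aq Bq _] := Hin _ Hq.
move: Aq Bq; rewrite /Nb /= => /andP [/andP [q1 q2] qb] /andP [/andP [q1' q2'] qb'].
have [rq1 rq2] := andP (Hr qi (introT andP (conj q1 q2))).
have [rq1' rq2'] := andP (Hr qi' (introT andP (conj q1' q2'))).
set vs := pre_dfs ord n rt rt in Hs Hlam Hwa Hwb qb qb' W0 P0 Eu Ev *.
have W0' : walkw w (nth rt vs 0) (Wseg zp n.-1) = Ltot w Z vs rt by rewrite W0.
set L := Ltot w Z vs rt in Hs Hlam Hwa Hwb qb qb' W0' *.
set a := ((k ^ i.-1)%:R * L%:R / n%:R : R) in Hs Hwa Hwb qb qb' *.
set b := Num.floor ((w u v)%:R / a) in qb qb'.
have n0 : (0 < n)%N by apply: leq_ltn_trans (ltn_ord u).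
have s0 : (0 < s)%N by case/andP: Hh => h1 h2; apply: leq_trans h2.
have L0 : (0 < L)%N.
  rewrite lt0n; apply/negP => /eqP L0; move: Hs; rewrite /a L0 !mulr0n !(mulr0, mul0r).
  move/eqP; rewrite pnatr_eq0; lia.
have apos : 0 < a.
  rewrite /a divr_gt0 ?mulr_gt0 ?ltr0n ?expn_gt0 //; lia.
have lamE : (lam%:R : R) = eps * a / 8.
  rewrite Hlam Hs /a; field.
  apply/and4P; split; rewrite ?pnatr_eq0 ?expn_eq0 ?(gt_eqF Heps) -?lt0n //.
  by rewrite negb_and -lt0n (ltnW Hk).
have sl : (lam * s = L)%N.
  apply/eqP; rewrite -(eqr_nat R) natrM Hlam divfK // pnatr_eq0 -lt0n s0 //.
have [h1 h2] := andP Hh; have [j1 j2] := andP Hj.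
have hl : (h * lam <= L)%N by rewrite -sl mulnC; apply: leq_mul.
have jl : (j * lam <= L)%N by rewrite -sl mulnC; apply: leq_mul.
have ql : (qi * lam <= L)%N by rewrite -sl mulnC; apply: leq_mul.
have ql' : (qi' * lam <= L)%N by rewrite -sl mulnC; apply: leq_mul.
have [Du1 Du2] := dist_bound h1 q1 Hxu (introT andP (conj rq1 rq2)).
have [Dv1 Dv2] := dist_bound j1 q1' Hxv (introT andP (conj rq1' rq2')).
have xuL : (xu <= walkw w (nth rt vs 0) (Wseg zp n.-1))%N.
  by rewrite W0'; apply: leq_trans hl; case/andP: Hxu.
have xvL : (xv <= walkw w (nth rt vs 0) (Wseg zp n.-1))%N.
  by rewrite W0'; apply: leq_trans jl; case/andP: Hxv.
have rL : (r qi <= walkw w (nth rt vs 0) (Wseg zp n.-1))%N.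
  by rewrite W0'; apply: ltnW; apply: leq_trans rq2 ql.
have rL' : (r qi' <= walkw w (nth rt vs 0) (Wseg zp n.-1))%N.
  by rewrite W0'; apply: ltnW; apply: leq_trans rq2' ql'.
have [Ku _] := key Zs Zirr Hwsym P0 xuL rL Eu Du1 Du2.
have [_ Kv] := key Zs Zirr Hwsym P0 xvL rL' Ev Dv1 Dv2.
have Bu := real_fin Heps apos Hwa lamE (int_dist qb).
have Bv := real_fin Heps apos Hwa lamE (int_dist qb').
apply: le_trans (lerD (lerD Ku (lexx _)) Kv) _.
exact: fin3.
Qed.
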